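(* For all positive integers $n$ and $j$, $R_n(j)=A_n(10j)$.
   Context: The continued fraction $[a_1;a_2:\dots:a_k]$ means $a_1+1/(a_2+1/(\cdots+1/a_k))$. For a sequence $(a_1,\dots,a_k)$ of positive integers with $k\ge2$, $\breve K(a_1,\dots,a_k)$ is the integer $c$ where $[a_1;a_2:\dots:a_{k-1}]=c/d$ with $\gcd(c,d)=1$, $c,d>0$ (the last entry $a_k$ is omitted). For a positive integer $n$ let $a_n=n^2+3$, $b_n=n^4+5n^2+5$, $r_n=(nb_n)^2+2$. Define $R_n(1)=\breve K(na_n,na_n,nb_n,nb_n)$, $R_n(2)=\breve K(na_n,na_n,nb_n,nb_n,nb_n,nb_n)$, and $R_n(j)=r_nR_n(j-1)-R_n(j-2)$ for $j>2$. Define $A_n(1)=1$, $A_n(2)=n(n^2+4)$, and $A_n(j)=nA_n(j-1)+A_n(j-2)$ for $j>2$. *)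

(* Defs.v *)
From HB Require Import structures.
From mathcomp Require Import all_boot all_order all_algebra.
Set Implicit Arguments. Unset Strict Implicit. Unset Printing Implicit Defensive.
Import Order.TTheory GRing.Theory Num.Theory.
Local Open Scope ring_scope.

Fixpoint cfrac (s : seq nat) : rat :=
  match s with
  | [::] => 0
  | [:: a] => a%:R
  | a :: t => a%:R + (cfrac t)^-1
  end.

Definition Kbreve (s : seq nat) : int := numq (cfrac (take (size s).-1 s)).

Definition a_ (n : nat) : nat := (n ^ 2 + 3)%N.
Definition b_ (n : nat) : nat := (n ^ 4 + 5 * n ^ 2 + 5)%N.
Definition r_ (n : nat) : nat := ((n * b_ n) ^ 2 + 2)%N.

Definition R1 (n : nat) : int :=
  Kbreve [:: n * a_ n; n * a_ n; n * b_ n; n * b_ n]%N.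
Definition R2 (n : nat) : int :=
  Kbreve [:: n * a_ n; n * a_ n; n * b_ n; n * b_ n; n * b_ n; n * b_ n]%N.

(* Rpair n k = (R_n(k+1), R_n(k+2)) *)
Fixpoint Rpair (n k : nat) : int * int :=
  match k with
  | 0 => (R1 n, R2 n)
  | k'.+1 => let: (x, y) := Rpair n k' in (y, (r_ n)%:Z * y - x)
  end.
(* R_n(j) for j >= 1 *)
Definition R (n j : nat) : int := (Rpair n j.-1).1.

(* Apair n k = (A_n(k+1), A_n(k+2)) *)
Fixpoint Apair (n k : nat) : nat * nat :=
  match k with
  | 0 => (1, n * (n ^ 2 + 4))%N
  | k'.+1 => let: (x, y) := Apair n k' in (y, n * y + x)%N
  end.
(* A_n(j) for j >= 1 *)
Definition A (n j : nat) : nat := (Apair n j.-1).1.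

(* Main.v *)
Require Import Defs.
From mathcomp Require Import all_boot all_order all_algebra ring zify.
Import Order.TTheory GRing.Theory Num.Theory.
Local Open Scope ring_scope.

Fixpoint cont (s : seq nat) : nat * nat :=
  match s with
  | [::] => (0, 1)%N
  | [:: a] => (a, 1)%N
  | a :: t => let: (p, q) := cont t in (a * p + q, p)%N
  end.

Lemma contP {s : seq nat} : s != [::] -> all (fun a => 0 < a)%N s ->
  [/\ cfrac s = (cont s).1%:R / (cont s).2%:R, coprime (cont s).1 (cont s).2
   , (0 < (cont s).1)%N & (0 < (cont s).2)%N].
Proof.
elim: s => [//|a [|b t] IH] _.
  by rewrite /= andbT => Ha; rewrite divr1 coprimen1 Ha.
move=> /andP[Ha Hall].
have [IH1 IH2 IH3 _] := IH isT Hall.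
have ec : cont (a :: b :: t) = let: (p, q) := cont (b :: t) in (a * p + q, p)%N by [].
have ef : cfrac (a :: b :: t) = a%:R + (cfrac (b :: t))^-1 by [].
rewrite ec ef IH1; move: IH2 IH3.
case: (cont (b :: t)) => p q /= cop pp.
split.
- have hp : (p%:R : rat) != 0 by rewrite pnatr_eq0 -lt0n.
  by rewrite invf_div natrD natrM; field.
- by rewrite /coprime gcdnC gcdnMDl; exact: cop.
- by rewrite addn_gt0 muln_gt0 Ha pp.
- exact: pp.
Qed.

Lemma numq_cont (s : seq nat) : s != [::] -> all (fun a => 0 < a)%N s ->
  numq (cfrac s) = (cont s).1%:Z.
Proof.
move=> s0 sa; have [-> cop _ h2] := contP s0 sa.
have := @coprimeq_num (cont s).1%:Z (cont s).2%:Z.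
rewrite !absz_nat => /(_ cop).
rewrite -!pmulrn => ->. by rewrite gtr0_sg ?mul1r // ltz_nat.
Qed.

Lemma AS n k : A n k.+3 = (n * A n k.+2 + A n k.+1)%N.
Proof. rewrite /A /=. by case: (Apair n k). Qed.

Lemma P0 n : (A n 21 + A n 1 = r_ n * A n 11)%N.
Proof. rewrite /A /r_ /b_ /=. ring. Qed.
Lemma P1 n : (A n 22 + A n 2 = r_ n * A n 12)%N.
Proof. rewrite /A /r_ /b_ /=. ring. Qed.

Lemma Pk n k : (A n (k + 21) + A n (k + 1) = r_ n * A n (k + 11))%N.
Proof.
suff: (A n (k + 21) + A n (k + 1) = r_ n * A n (k + 11))%N /\
      (A n (k + 22) + A n (k + 2) = r_ n * A n (k + 12))%N by case.
elim: k => [|k [H0 H1]]; first by split; [exact: P0 | exact: P1].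
split.
  by rewrite !addSn -!addnS.
have e1 : (k.+1 + 22 = (k + 20).+3)%N by rewrite !addSn !addnS.
have e2 : (k.+1 + 2 = k.+3)%N by rewrite !addSn !addnS addn0.
have e3 : (k.+1 + 12 = (k + 10).+3)%N by rewrite !addSn !addnS.
rewrite e1 e2 e3 !AS.
have f1 : ((k + 20).+2 = k + 22)%N by rewrite !addnS.
have f2 : ((k + 20).+1 = k + 21)%N by rewrite !addnS.
have f3 : ((k + 10).+2 = k + 12)%N by rewrite !addnS.
have f4 : ((k + 10).+1 = k + 11)%N by rewrite !addnS.
have f5 : (k.+2 = k + 2)%N by rewrite !addnS addn0.
have f6 : (k.+1 = k + 1)%N by rewrite !addnS addn0.
rewrite f1 f2 f3 f4 f5 f6.
transitivity (n * (A n (k + 22) + A n (k + 2)) + (A n (k + 21) + A n (k + 1)))%N.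
  ring.
rewrite H1 H0; ring.
Qed.

Lemma Rpair_eq n k : (0 < n)%N ->
  Rpair n k = ((A n (10 * k.+1))%:Z, (A n (10 * k.+2))%:Z).
Proof.
move=> n0; elim: k => [|k IH].
  have pa : (0 < n * a_ n)%N by rewrite muln_gt0 n0 /a_ addn_gt0 orbT.
  have pb : (0 < n * b_ n)%N by rewrite muln_gt0 n0 /b_ addn_gt0 orbT.
  change (Rpair n 0) with (R1 n, R2 n).
  have -> : R1 n = (cont [:: n * a_ n; n * a_ n; n * b_ n]%N).1%:Z.
    by rewrite -numq_cont //= pa pb.
  have -> : R2 n = (cont [:: n * a_ n; n * a_ n; n * b_ n; n * b_ n; n * b_ n]%N).1%:Z.
    by rewrite -numq_cont //= pa pb.
  rewrite /=.
  congr (_, _); congr Posz; rewrite /A /a_ /b_ /=; ring.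
rewrite /= IH.
have := Pk n (10 * k + 9).
have -> : (10 * k + 9 + 21 = 10 * k.+3)%N by lia.
have -> : (10 * k + 9 + 1 = 10 * k.+1)%N by lia.
have -> : (10 * k + 9 + 11 = 10 * k.+2)%N by lia.
move=> H; congr (_, _).
by apply/eqP; rewrite subr_eq -PoszM -PoszD H.
Qed.

Theorem lemma4 (n j : nat) : (0 < n)%N -> (0 < j)%N ->
  R n j = (A n (10 * j))%:Z.
Proof.
move=> n0; case: j => // j _.
by rewrite /R /= Rpair_eq.
Qed.
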